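(* Let $\mathcal G$ be an aperiodic discrete p.m.p. groupoid. Let $K$ be a standard probability space and assume that $\mu_K$ is not a point mass. Then the discrete p.m.p. groupoid $\mathscr B_K(\mathcal G)$ is principal.
   Context: Discrete p.m.p. groupoid: groupoid with standard Borel structure, Borel unit space, Borel countable-to-one $s,r$, Borel operations, probability measure on the unit space with $\int|xD|=\int|Dx|$ for Borel $D$; aperiodic: $x\mathcal G$ infinite for a.e. $x$; principal (up to null sets): $g\mapsto(r(g),s(g))$ injective on a conull set. $\mathscr B_K(\mathcal G)$: groupoid of pairs $(g,f)$, $f\in K^{s(g)\mathcal G}$, $s(g,f)=(s(g),f)$, $r(g,f)=(r(g),gf)$ with $(gf)(h)=f(g^{-1}h)$, product $(g_1,g_0f)(g_0,f)=(g_1g_0,f)$, unit measure $\int\delta_x\otimes\mu_K^{x\mathcal G}\,d\mu_{\mathcal G^0}(x)$. *)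

(* Defs.v *)
From HB Require Import structures.
From mathcomp Require Import all_boot all_order all_algebra.
From mathcomp Require Import all_classical all_reals all_analysis.
Set Implicit Arguments.
Unset Strict Implicit.
Unset Printing Implicit Defensive.
Import Order.TTheory GRing.Theory Num.Theory.
Local Open Scope classical_set_scope.
Local Open Scope ring_scope.

(* Standard Borel spaces: measurable spaces Borel-isomorphic to a Borel *)
Definition standard_borel (R : realType) {d} (T : measurableType d) : Prop :=
  exists f : T -> R,
    [/\ injective f, measurable_fun setT f, measurable (range f)
      & forall A : set T, measurable A -> measurable (f @` A)].

(* Groupoids.  A : arrows, U : units (embedded in A by gid),           *)
(* gs, gr : source and range, gmul g h = g h (defined when gs g = gr h)*)
Record groupoid_axioms {A U : Type} (gs gr : A -> U) (gid : U -> A)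
    (gmul : A -> A -> A) (ginv : A -> A) : Prop := GroupoidAxioms {
  gax_sid : forall u, gs (gid u) = u;
  gax_rid : forall u, gr (gid u) = u;
  gax_smul : forall g h, gs g = gr h -> gs (gmul g h) = gs h;
  gax_rmul : forall g h, gs g = gr h -> gr (gmul g h) = gr g;
  gax_assoc : forall g h k, gs g = gr h -> gs h = gr k ->
      gmul (gmul g h) k = gmul g (gmul h k);
  gax_idl : forall g, gmul (gid (gr g)) g = g;
  gax_idr : forall g, gmul g (gid (gs g)) = g;
  gax_sinv : forall g, gs (ginv g) = gr g;
  gax_rinv : forall g, gr (ginv g) = gs g;
  gax_mulV : forall g, gmul g (ginv g) = gid (gr g);
  gax_Vmul : forall g, gmul (ginv g) g = gid (gs g) }.

Definition card_ext (R : realType) {T : choiceType} (X : set T) : \bar R :=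
  counting X.

Definition dpmp_groupoid (R : realType) {dA dU} {A : measurableType dA}
    {U : measurableType dU} (gs gr : A -> U) (gid : U -> A)
    (gmul : A -> A -> A) (ginv : A -> A) (mu : probability U R) : Prop :=
  [/\ groupoid_axioms gs gr gid gmul ginv,
      standard_borel R A /\ standard_borel R U,
      [/\ measurable_fun setT gid, measurable (range gid),
          measurable_fun setT gs, measurable_fun setT gr &
          forall x : U, countable (gs @^-1` [set x]) /\
                        countable (gr @^-1` [set x])],
      measurable_fun setT ginv /\
      measurable_fun [set p : A * A | gs p.1 = gr p.2]
                     (fun p : A * A => gmul p.1 p.2) &
      (* measure preservation: \int |xD| = \int |Dx| *)
      forall D : set A, measurable D ->
        (\int[mu]_x card_ext R (D `&` gr @^-1` [set x]) =
         \int[mu]_x card_ext R (D `&` gs @^-1` [set x]))%E].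

Definition fib {A U : Type} (gr : A -> U) (x : U) : Type := {g : A | gr g = x}.

Definition aperiodic (R : realType) {dA dU} {A : measurableType dA}
    {U : measurableType dU} (gr : A -> U) (mu : probability U R) : Prop :=
  {ae mu, forall x : U, infinite_set (gr @^-1` [set x])}.

Definition cylinders {I : Type} {dK} (K : measurableType dK) : set (set (I -> K)) :=
  [set C | exists (i : I) (B : set K), measurable B /\ C = (fun f => f i) @^-1` B].

Definition prodspace (I : Type) {dK} (K : measurableType dK) :=
  g_sigma_algebraType (@cylinders I dK K).

Definition is_product_measure (R : realType) (I : Type) {dK}
    {K : measurableType dK} (muK : probability K R)
    (P : probability (prodspace I K) R) : Prop :=
  forall (n : nat) (idx : 'I_n -> I) (B : 'I_n -> set K),
    injective idx -> (forall i, measurable (B i)) ->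
    P [set f : prodspace I K | forall i, B i (f (idx i))] =
      (\prod_(i < n) muK (B i))%E.

Definition is_point_mass (R : realType) {dK} {K : measurableType dK}
    (muK : probability K R) : Prop :=
  exists k : K, forall B : set K, measurable B -> muK B = dirac k B.

Section BK.
Local Unset Implicit Arguments.
Variables (A U K : Type) (gs gr : A -> U) (gid : U -> A)
  (gmul : A -> A -> A) (ginv : A -> A)
  (HG : groupoid_axioms gs gr gid gmul ginv).

Definition BK_unit := {x : U & fib gr x -> K}.
Definition BK_arrow := {g : A & fib gr (gs g) -> K}.

Definition inv_mul_fib (g : A) (h : fib gr (gr g)) : fib gr (gs g) :=
  exist _ (gmul (ginv g) (proj1_sig h))
    (eq_trans (gax_rmul HG (eq_trans (gax_sinv HG g) (esym (proj2_sig h))))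
              (gax_rinv HG g)).

Definition BK_act (g : A) (f : fib gr (gs g) -> K) : fib gr (gr g) -> K :=
  fun h => f (inv_mul_fib g h).

Definition BK_s (a : BK_arrow) : BK_unit := existT _ (gs (projT1 a)) (projT2 a).
Definition BK_r (a : BK_arrow) : BK_unit :=
  existT _ (gr (projT1 a)) (BK_act (projT1 a) (projT2 a)).
End BK.

(* Null sets of units of B_K(G) for the measure
   \int delta_x (x) mu_K^{xG} d mu(x):  for mu-a.e. x the fibre is
   mu_K^{xG}-negligible. *)
Definition BK_null (R : realType) {dU dK} {A : Type} {U : measurableType dU}
    {K : measurableType dK} (gr : A -> U) (mu : probability U R)
    (P : forall x : U, probability (prodspace (fib gr x) K) R)
    (N : set (BK_unit A U K gr)) : Prop :=
  {ae mu, forall x : U,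
     (P x).-negligible [set f : prodspace (fib gr x) K | N (existT _ x f)]}.

(* B_K(G) is principal (up to null sets): g |-> (r(g), s(g)) is injective
   on a conull set of arrows (a set of arrows is null iff its set of
   ranges is null, the arrow measure being the counting measure
   \int |uD| d nu(u)). *)
Definition BK_principal (R : realType) {dU dK} {A : Type}
    {U : measurableType dU} {K : measurableType dK}
    (gs gr : A -> U) (gid : U -> A) (gmul : A -> A -> A) (ginv : A -> A)
    (HG : groupoid_axioms gs gr gid gmul ginv) (mu : probability U R)
    (P : forall x : U, probability (prodspace (fib gr x) K) R) : Prop :=
  exists D : set (BK_arrow A U K gs gr),
    BK_null mu P [set u | exists2 a, D a & @BK_r A U K gs gr gid gmul ginv HG a = u] /\
    forall a1 a2 : BK_arrow A U K gs gr, ~ D a1 -> ~ D a2 ->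
      @BK_r A U K gs gr gid gmul ginv HG a1 = @BK_r A U K gs gr gid gmul ginv HG a2 -> @BK_s A U K gs gr a1 = @BK_s A U K gs gr a2 -> a1 = a2.

(* Main.v *)
Require Import Defs.
From HB Require Import structures.
From mathcomp Require Import all_boot all_order all_algebra.
From mathcomp Require Import all_classical all_reals all_analysis.
From mathcomp Require Import ring lra.
Set Implicit Arguments.
Unset Strict Implicit.
Unset Printing Implicit Defensive.
Import Order.TTheory GRing.Theory Num.Theory.
Import numFieldNormedType.Exports.
Local Open Scope classical_set_scope.
Local Open Scope ring_scope.

Section Alg.
Variables (A U K : Type) (gs gr : A -> U) (gid : U -> A)
  (gmul : A -> A -> A) (ginv : A -> A)
  (HG : groupoid_axioms gs gr gid gmul ginv).

Lemma cancel_l k a : gs k = gr a -> gmul (ginv k) (gmul k a) = a.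
Proof.
move=> ka; rewrite -(gax_assoc HG) ?(gax_sinv HG) //.
by rewrite (gax_Vmul HG) ka (gax_idl HG).
Qed.

Lemma free_l k c : gs k = gr c -> gmul k c = c -> k = gid (gr c).
Proof.
move=> kc e; rewrite -[k](gax_idr HG) kc -(gax_mulV HG).
by rewrite -(gax_assoc HG) ?(gax_rinv HG) // e.
Qed.

Lemma fib_eq u (w1 w2 : fib gr u) : proj1_sig w1 = proj1_sig w2 -> w1 = w2.
Proof.
case: w1 => a1 p1; case: w2 => a2 p2 /= e; subst a2.
by rewrite (Prop_irrelevance p1 p2).
Qed.

Lemma sigT_app (s1 s2 : {u : U & fib gr u -> K}) : s1 = s2 ->
  forall (w1 : fib gr (projT1 s1)) (w2 : fib gr (projT1 s2)),
  proj1_sig w1 = proj1_sig w2 -> projT2 s1 w1 = projT2 s2 w2.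
Proof. by move=> <- w1 w2 /fib_eq ->. Qed.
Arguments sigT_app [s1 s2] _ w1 w2 _.

Definition tofib (x : U) (a : A) : fib gr x :=
  match pselect (gr a = x) with
  | left p => exist _ a p
  | right _ => exist _ (gid x) (gax_rid HG x)
  end.

Lemma tofibE x c : gr c = x -> proj1_sig (tofib x c) = c.
Proof. by move=> e; rewrite /tofib; case: pselect. Qed.

Local Notation rr := (@BK_r A U K gs gr gid gmul ginv HG).
Local Notation ss := (@BK_s A U K gs gr).

Lemma bad_inv (x : U) (F : fib gr x -> K) (a a' : BK_arrow A U K gs gr) :
  a' <> a -> rr a' = rr a -> ss a' = ss a ->
  rr a = existT _ x F ->
  exists k, [/\ gs k = x, gr k = x, k <> gid x &
    forall c, gr c = x -> F (tofib x c) = F (tofib x (gmul k c))].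
Proof.
case: a => g f; case: a' => g' f'; rewrite /BK_r /BK_s /= => ne e1 e2 e3.
have ex : gr g = x := f_equal (@projT1 _ _) e3.
have ey : gs g' = gs g := f_equal (@projT1 _ _) e2.
have ex' : gr g' = gr g := f_equal (@projT1 _ _) e1.
have sgi : gs g' = gr (ginv g) by rewrite (gax_rinv HG).
exists (gmul g' (ginv g)); split.
- by rewrite (gax_smul HG sgi) (gax_sinv HG).
- by rewrite (gax_rmul HG sgi) ex'.
- move=> ek; apply: ne.
  have eg : g' = g.
    rewrite -[g'](gax_idr HG) ey -(gax_Vmul HG) -(gax_assoc HG) //;
      last by rewrite (gax_sinv HG).
    by rewrite ek -ex (gax_idl HG).
  subst g'. have -> : f' = f. apply: funext => w.

  exact: (sigT_app e2 w w).
  by [].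
- move=> c cx.
  have cg : gr c = gr g by rewrite cx.
  have kc : gr (gmul (gmul g' (ginv g)) c) = gr g.
    by rewrite (gax_rmul HG) ?(gax_rmul HG sgi) ?ex' ?(gax_smul HG sgi) ?(gax_sinv HG).
  have kc' : gr (gmul (gmul g' (ginv g)) c) = gr g' by rewrite kc ex'.
  have h1 := sigT_app e3 (exist _ c cg) (tofib x c) (esym (tofibE cx)).
  have h2 := sigT_app e3 (exist _ _ kc) (tofib x (gmul (gmul g' (ginv g)) c))
    (esym (tofibE (etrans kc ex))).
  have h3 := sigT_app e1 (exist _ _ kc') (exist _ _ kc) erefl.
  have h4 := sigT_app e2 (inv_mul_fib _ _ _ _ _ _ _ HG g' (exist _ _ kc'))
    (inv_mul_fib _ _ _ _ _ _ _ HG g (exist _ _ cg)).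
  simpl in h1, h2, h3, h4.
  rewrite -h1 -h2 -h3 /BK_act h4 //=.
  rewrite (gax_assoc HG) ?(gax_sinv HG) ?cg //.
  rewrite cancel_l // (gax_rmul HG) ?(gax_sinv HG) ?cg //.
Qed.

End Alg.

Lemma geo0_real (R : realType) (q s : R) (h : forall n : nat, s <= q ^+ n)
  (q0 : 0 <= q) (q1 : q < 1) : s <= 0.
Proof.
have hc : (GRing.exp q : R ^nat) @ \oo --> 0.
    by apply: cvg_expr; rewrite ger0_norm.
have hcv : cvg ((GRing.exp q : R ^nat) @ \oo) by apply/cvg_ex; exists 0.
rewrite -(cvg_lim _ hc) //.
apply: (limr_ge hcv).
near=> n; exact: h.
Unshelve. all: by end_near.
Qed.

Lemma geo0 (R : realType) (r : \bar R) (q : R) : (0 <= r)%E -> 0 <= q -> q < 1 ->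
  (forall n, r <= (q ^+ n)%:E)%E -> r = 0%E.
Proof.
case: r => [s| |] // hr q0 q1 h.
- have := @geo0_real R q s (fun n => h n) q0 q1.
  move=> s0; congr (_%:E); apply/eqP; rewrite eq_le s0.
  by rewrite -lee_fin.
- by have := h 0%N.
Qed.

Section Meas.
Variables (R : realType) (A : choiceType) (U : Type) (dK : measure_display)
  (K : measurableType dK) (gs gr : A -> U) (gid : U -> A)
  (gmul : A -> A -> A) (ginv : A -> A)
  (HG : groupoid_axioms gs gr gid gmul ginv) (x : U)
  (muK : probability K R) (P : probability (prodspace (fib gr x) K) R)
  (HP : is_product_measure muK P) (B : set K) (mB : measurable B).

Local Notation tf := (tofib HG x).
Definition setb (b : bool) : set K := if b then B else ~` B.
Definition p := fine (muK B).
Definition pb (b : bool) : R := if b then p else 1 - p.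

Lemma setb_meas b : measurable (setb b).
Proof. by case: b => //=; apply: measurableC. Qed.

Lemma mu_setb b : muK (setb b) = (pb b)%:E.
Proof.
have hB : muK B = p%:E by rewrite /p fineK // fin_num_measure.
case: b => /=; first by [].
by rewrite probability_setC // hB.
Qed.

Definition rectP (l : seq (A * bool)) (F : fib gr x -> K) : Prop :=
  foldr (fun ab acc => setb ab.2 (F (tf ab.1)) /\ acc) True l.

Definition rect l : set (prodspace (fib gr x) K) := [set F | rectP l F].

Lemma rect_meas l : measurable (rect l).
Proof.
elim: l => [|[a b] l IH].
  by rewrite /rect /rectP /=; have -> : [set _ : prodspace _ _ | True] = setT by [];
    exact: measurableT.
have -> : rect ((a, b) :: l) =
  [set F : prodspace (fib gr x) K | setb b (F (tf a))] `&` rect l by [].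
apply: measurableI => //; apply: sub_sigma_algebra.
by exists (tf a), (setb b); split => //; apply: setb_meas.
Qed.

Lemma rect_nth l F : rectP l F <->
  forall i, (i < size l)%N -> setb (nth (gid x, true) l i).2
                                   (F (tf (nth (gid x, true) l i).1)).
Proof.
elim: l => [|ab l IH] /=; first by split.
split.
  by case=> h1 /IH h2 [|i] //= /h2.
move=> h; split; first exact: (h 0%N).
by apply/IH => i hi; apply: (h i.+1).
Qed.

Lemma rect_prob l : uniq (map fst l) -> (forall a, a \in map fst l -> gr a = x) ->
  P (rect l) = (\prod_(ab <- l) pb ab.2)%:E.
Proof.
move=> ul lx.
have HP' : forall (n : nat) (idx : 'I_n -> fib gr x) (Bs : 'I_n -> set K),
    injective idx -> (forall i, measurable (Bs i)) ->
    P [set f : prodspace (fib gr x) K | forall i, Bs i (f (idx i))] =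
    (\prod_(i < n) muK (Bs i))%E := HP.
have := HP' (size l) (fun i : 'I_(size l) => tf (nth (gid x, true) l i).1)
            (fun i : 'I_(size l) => setb (nth (gid x, true) l i).2).
have lxn : forall i, (i < size l)%N -> gr (nth (gid x, true) l i).1 = x.
  move=> i hi; apply: lx; rewrite -(nth_map _ (gid x)) //.
  by apply: mem_nth; rewrite size_map.
have -> : rect l = [set f : prodspace (fib gr x) K | forall i : 'I_(size l),
    setb (nth (gid x, true) l i).2 (f (tf (nth (gid x, true) l i).1))].
  rewrite /rect; apply/seteqP; split => F /=.
    by move=> /rect_nth h i; apply: h.
  by move=> h; apply/rect_nth => i hi; apply: (h (Ordinal hi)).
move=> ->.
- rewrite (big_nth (gid x, true)) big_mkord -prodEFin.
  by apply: eq_bigr => i _; rewrite mu_setb.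
- move=> i j /(f_equal (@proj1_sig _ _)); rewrite !tofibE ?lxn // => e.
  apply: ord_inj; apply/eqP; rewrite -(nth_uniq (gid x) _ _ ul) ?size_map //.
  by rewrite !(nth_map (gid x, true)) // e.
- by move=> i; apply: setb_meas.
Qed.

Fixpoint W (ps : seq (A * A)) (l : seq (A * bool)) : set (prodspace (fib gr x) K) :=
  match ps with
  | [::] => rect l
  | ab :: ps' => W ps' ((ab.1, true) :: (ab.2, true) :: l) `|`
                 W ps' ((ab.1, false) :: (ab.2, false) :: l)
  end.

Definition flat (ps : seq (A * A)) : seq A := flatten (map (fun ab => [:: ab.1; ab.2]) ps).
Definition pairsP (ps : seq (A * A)) (F : fib gr x -> K) : Prop :=
  foldr (fun ab acc => F (tf ab.1) = F (tf ab.2) /\ acc) True ps.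
Definition q := p * p + (1 - p) * (1 - p).

Lemma W_meas ps l : measurable (W ps l).
Proof.
elim: ps l => [|ab ps IH] l /=; first exact: rect_meas.
exact: measurableU.
Qed.

Lemma W_sub ps l F : rectP l F -> pairsP ps F -> W ps l F.
Proof.
elim: ps l => [|[a b] ps IH] l /=; first by [].
move=> hl [eab hps].
case: (pselect (B (F (tf a)))) => hB; [left|right]; apply: IH => //=;
  by split => //; split => //; rewrite -eab.
Qed.

Lemma W_le ps l : uniq (map fst l ++ flat ps) ->
  (forall a, a \in map fst l ++ flat ps -> gr a = x) ->
  (P (W ps l) <= ((q ^+ size ps) * \prod_(ab <- l) pb ab.2)%:E)%E.
Proof.
elim: ps l => [|[a b] ps IH] l /=.
  by rewrite cats0 expr0 mul1r => ul lx; rewrite rect_prob.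
move=> ul lx.
have e : forall t : bool, perm_eq (map fst l ++ flat ((a, b) :: ps))
   (map fst ((a, t) :: (b, t) :: l) ++ flat ps).
  move=> t; rewrite /flat /= -/(flat ps).
  by rewrite (perm_catCA (map fst l) [:: a; b]) /=.
apply: le_trans (measureU2 _ (W_meas _ _) (W_meas _ _)) _.
apply: le_trans (leeD (IH _ _ _) (IH _ _ _)) _.
- by rewrite -(perm_uniq (e true)).
- by move=> c; rewrite -(perm_mem (e true)); apply: lx.
- by rewrite -(perm_uniq (e false)).
- by move=> c; rewrite -(perm_mem (e false)); apply: lx.
rewrite -EFinD lee_fin !big_cons /= exprS /q.
rewrite le_eqVlt; apply/orP; left; apply/eqP; ring.
Qed.

Variables (k : A) (ks : gs k = x) (kr : gr k = x) (kne : k <> gid x)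
  (Xinf : infinite_set (gr @^-1` [set x])).

Lemma pick_ex (S : seq A) : exists c, [/\ gr c = x, c \notin S & gmul k c \notin S].
Proof.
case: (pselect (exists c, [/\ gr c = x, c \notin S & gmul k c \notin S])) => // H.
exfalso; apply: Xinf.
apply: sub_finite_set (finite_seq (S ++ map (gmul (ginv k)) S)) => c /= cx.
case: (boolP (c \in S)) => cS; first by rewrite mem_cat cS.
case: (boolP (gmul k c \in S)) => kS; last by exfalso; apply: H; exists c; split.
rewrite mem_cat; apply/orP; right; apply/mapP; exists (gmul k c) => //.
by rewrite (cancel_l HG) // ks cx.
Qed.

Definition next (S : seq A) : A := proj1_sig (cid (pick_ex S)).

Fixpoint pairs (n : nat) : seq (A * A) :=
  match n with
  | 0%N => [::]
  | n'.+1 => let c := next (flat (pairs n')) in (c, gmul k c) :: pairs n'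
  end.

Lemma pairs_size n : size (pairs n) = n.
Proof. by elim: n => //= n ->. Qed.

Lemma pairs_ok n : uniq (flat (pairs n)) /\ (forall a, a \in flat (pairs n) -> gr a = x).
Proof.
elim: n => [|n [IH1 IH2]] //=.
rewrite /next; case: cid => c [cx c1 c2] /=.
rewrite -/(flat (pairs n)).
have kcx : gr (gmul k c) = x by rewrite (gax_rmul HG) // ks cx.
split.
  rewrite /= inE negb_or (negbTE c1) c2 IH1 !andbT; apply/eqP => e.
  apply: kne; rewrite -cx; apply: (free_l HG); first by rewrite ks cx.
  by rewrite -e.
by move=> a; rewrite !inE => /orP[/eqP->//|/orP[/eqP->//|/IH2]].
Qed.

Definition Sk := [set F : prodspace (fib gr x) K |
  forall c, gr c = x -> F (tf c) = F (tf (gmul k c))].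

Lemma pairsP_pairs n F : Sk F -> pairsP (pairs n) F.
Proof.
move=> hF; elim: n => //= n IH; split => //.
by rewrite /next; case: cid => c [cx _ _] /=; apply: hF.
Qed.

Lemma W_pairs_le n : (P (W (pairs n) [::]) <= (q ^+ n)%:E)%E.
Proof.
have [u1 u2] := pairs_ok n.
by have := @W_le (pairs n) [::] u1 u2; rewrite big_nil mulr1 pairs_size.
Qed.

Lemma Sk_negl : 0 < p -> p < 1 -> P.-negligible Sk.
Proof.
move=> p0 p1.
exists (\bigcap_n W (pairs n) [::]); split.
- by apply: bigcapT_measurable => n; apply: W_meas.
- apply: (@geo0 _ _ q) => //.
  + by rewrite /q; nra.
  + by rewrite /q; nra.
  + move=> n; apply: le_trans (W_pairs_le n).
    by apply: le_measure; rewrite ?inE; [apply: bigcapT_measurable => m; apply: W_meas|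
       apply: W_meas| apply: bigcap_inf].
- by move=> F hF n _; apply: W_sub => //; apply: pairsP_pairs.
Qed.

End Meas.

Section Borel.
Variables (R : realType) (dK : measure_display) (K : measurableType dK)
  (muK : probability K R) (f : K -> R) (finj : injective f)
  (mf : measurable_fun setT f).

Lemma mpre (Y : set R) : measurable Y -> measurable (f @^-1` Y).
Proof. by move=> mY; rewrite -[f @^-1` _]setTI; apply: mf. Qed.

Lemma mle a : measurable [set y | f y <= a].
Proof.
have -> : [set y | f y <= a] = f @^-1` [set` `]-oo, a]].
  by apply/seteqP; split => y /=; rewrite in_itv.
by apply: mpre; apply: measurable_itv.
Qed.

Lemma arch_inv (d : R) : 0 < d -> exists n : nat, (n.+1%:R)^-1 < d.
Proof.
move=> d0; exists (Num.bound d^-1).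
have di : 0 < d^-1 by rewrite invr_gt0.
have h := archi_boundP (ltW di).
rewrite -[d in _ < d]invrK ltf_pV2 ?posrE ?ltr0n //.
by apply: lt_le_trans h _; rewrite ler_nat.
Qed.

Lemma negl_of (A : set K) : measurable A -> muK A = 0%E -> muK.-negligible A.
Proof. by move=> mA h; exists A; split. Qed.

Hypothesis H01 : forall B, measurable B -> muK B = 0%E \/ muK B = 1%E.

Lemma point_mass_of01 : is_point_mass muK.
Proof.
pose Z := [set s : R | muK [set y | f y <= s] = 0%E].
have setT_nn : ~ muK.-negligible setT.
  move/measure_negligible => /(_ measurableT) h.
  have := probability_setT muK; rewrite h => e.
  have : (0 < 1 :> \bar R)%E by rewrite lte_fin ltr01.
  by rewrite -e ltxx.
have Zn : Z !=set0.
  apply: contrapT => Z0; apply: setT_nn.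
  have -> : setT = \bigcup_n ~` [set y | f y <= - n%:R].
    apply/seteqP; split => // y _.
    exists (Num.bound `|f y|) => //=.
    have := archi_boundP (normr_ge0 (f y)); rewrite ltr_norml => /andP[h _].
    by apply/negP; rewrite -ltNge.
  apply: negligible_bigcup => n.
  apply: negl_of; first by apply: measurableC; apply: mle.
  rewrite probability_setC; last by apply: mle.
  have [h|->] := H01 (mle (- n%:R)); last by rewrite subee.
  by exfalso; apply: Z0; exists (- n%:R).
have [N hN] : exists N : R, muK [set y | f y <= N] = 1%E.
  apply: contrapT => nN; apply: setT_nn.
  have -> : setT = \bigcup_n [set y | f y <= n%:R].
    apply/seteqP; split => // y _.
    exists (Num.bound `|f y|) => //=.
    have := archi_boundP (normr_ge0 (f y)); rewrite ltr_norml => /andP[_ h].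
    exact: ltW.
  apply: negligible_bigcup => n.
  apply: negl_of; first by apply: mle.
  have [//|h] := H01 (mle n%:R).
  by exfalso; apply: nN; exists n%:R.
have ubN : forall s, Z s -> s <= N.
  move=> s Zs; rewrite leNgt; apply/negP => Ns.
  have : (muK [set y | (f y <= N)%R] <= muK [set y | (f y <= s)%R])%E.
    apply: le_measure; rewrite ?inE; try apply: mle.
    by move=> y /= h; apply: le_trans h (ltW Ns).
  rewrite hN Zs lee_fin; apply/negP; rewrite -ltNge; exact: ltr01.
have hsZ : has_sup Z by split => //; exists N => s Zs; apply: ubN.
pose t := sup Z.
have nA : muK.-negligible [set y | f y < t].
  apply: (@negligibleS _ _ _ _ (\bigcup_n [set y | f y <= t - (n.+1%:R)^-1])).
    move=> y /= hy.
    have ty : 0 < t - f y by rewrite subr_gt0.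
    have [n hn] := arch_inv ty.
    by exists n => //=; rewrite lerBrDl -lerBrDr; apply: ltW.
  apply: negligible_bigcup => n.
  have ep : 0 < (n.+1%:R : R)^-1 by rewrite invr_gt0 ltr0n.
  have [e Ze he] := sup_adherent ep hsZ.
  apply: (@negligibleS _ _ _ _ [set y | f y <= e]).
    by move=> y /= h; apply: le_trans h (ltW he).
  by apply: negl_of => //; apply: mle.
have nB : muK.-negligible [set y | t < f y].
  apply: (@negligibleS _ _ _ _ (\bigcup_n ~` [set y | f y <= t + (n.+1%:R)^-1])).
    move=> y /= hy.
    have ty : 0 < f y - t by rewrite subr_gt0.
    have [n hn] := arch_inv ty.
    exists n => //=; apply/negP; rewrite -ltNge -ltrBrDl; exact: hn.
  apply: negligible_bigcup => n.
  have ep : 0 < (n.+1%:R : R)^-1 by rewrite invr_gt0 ltr0n.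
  apply: negl_of; first by apply: measurableC; apply: mle.
  rewrite probability_setC; last by apply: mle.
  have [h|->] := H01 (mle (t + (n.+1%:R)^-1)); last by rewrite subee.
  exfalso; have := sup_upper_bound hsZ h.
  by rewrite -/t; apply/negP; rewrite -ltNge ltrDl.
pose E := [set y | f y = t].
have mE : measurable E.
  have -> : E = f @^-1` [set t] by [].
  by apply: mpre; apply: measurable_set1.
have nE : muK (~` E) = 0%E.
  have [M [mM M0 sub]] := negligibleU nA nB.
  apply/le_anti; rewrite measure_ge0 andbT -M0.
  apply: le_measure; rewrite ?inE //; first by apply: measurableC.
  move=> y /= ny; apply: sub.
  by case: (ltgtP (f y) t) => h; [left|right|].
have E1 : muK E = 1%E.
  have := probability_setC muK mE; rewrite nE.
  rewrite -(fineK (fin_num_measure _ _ mE)) => /esym/eqP.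
  by rewrite -EFinB eqe subr_eq0 => /eqP <-.
have [k fk] : exists k, f k = t.
  apply: contrapT => nk.
  have E0 : E = set0 by apply/seteqP; split => y //= ey; apply: nk; exists y.
  by move: E1; rewrite E0 measure0 => /(congr1 fine) /= /eqP; rewrite eq_sym oner_eq0.
exists k => C mC; rewrite diracE.
case: (boolP (k \in C)) => kC.
  apply/le_anti; rewrite probability_le1 //= -E1.
  apply: le_measure; rewrite ?inE //.
  move=> y /= fy; have ky : k = y by apply: finj; rewrite fk fy.
  by rewrite -ky; move: kC; rewrite inE.
have -> : ((false%:R : R)%:E = 0 :> \bar R)%E by rewrite mulr0n.
apply/le_anti; rewrite measure_ge0 andbT -nE.
apply: le_measure; rewrite ?inE //; first by apply: measurableC.
move=> y Cy /= fy; have ky : k = y by apply: finj; rewrite fk fy.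
by move: kC; rewrite ky; move=> /negP; apply; rewrite inE.
Qed.
End Borel.

Lemma exists_B (R : realType) (dK : measure_display) (K : measurableType dK)
  (muK : probability K R) (HK : standard_borel R K) (Hnd : ~ is_point_mass muK) :
  exists B, measurable B /\ 0 < fine (muK B) < 1.
Proof.
apply: contrapT => nB; apply: Hnd.
have [f [finj mf _ _]] := HK.
apply: (point_mass_of01 finj mf) => B mB.
have e : muK B = (fine (muK B))%:E by rewrite fineK // fin_num_measure.
have h0 : 0 <= fine (muK B) by rewrite -lee_fin -e measure_ge0.
have h1 : fine (muK B) <= 1 by rewrite -lee_fin -e probability_le1.
rewrite e; case: (ltrgtP 0 (fine (muK B))) => [p0|//|<-]; last by left.
case: (ltrgtP (fine (muK B)) 1) => [p1|p1|->]; last by right.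
- by exfalso; apply: nB; exists B; split => //; rewrite p0 p1.
- by exfalso; move: h1; rewrite leNgt p1.
by move=> h; exfalso; move: h0; rewrite leNgt h.
Qed.

Theorem proposition2p26 (R : realType)
    (dA dU : measure_display) (A : measurableType dA) (U : measurableType dU)
    (gs gr : A -> U) (gid : U -> A) (gmul : A -> A -> A) (ginv : A -> A)
    (mu : probability U R)
    (HG : groupoid_axioms gs gr gid gmul ginv)
    (Hdpmp : dpmp_groupoid gs gr gid gmul ginv mu)
    (Hap : aperiodic gr mu)
    (dK : measure_display) (K : measurableType dK) (muK : probability K R)
    (HK : standard_borel R K)
    (HnotDirac : ~ is_point_mass muK)
    (P : forall x : U, probability (prodspace (fib gr x) K) R)
    (HP : forall x : U, is_product_measure muK (P x)) :
  BK_principal HG mu P.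
Proof.
pose rr := @BK_r A U K gs gr gid gmul ginv HG.
pose ss := @BK_s A U K gs gr.
exists (fun a => exists a', [/\ a' <> a, rr a' = rr a & ss a' = ss a]); split;
  last first.
  move=> a1 a2 n1 n2 er es.
  apply: contrapT => ne; apply: n1; exists a2; split => //.
  by move=> e; apply: ne.
have [B [mB /andP[p0 p1]]] := exists_B HK HnotDirac.
have [_ _ [_ _ _ _ hcount] _ _] := Hdpmp.
rewrite /BK_null /aperiodic.
move: Hap; apply: negligibleS => x /= ngood Xinf; apply: ngood.
have [g ginj] := countable_injP _ (proj2 (hcount x)).
pose T := fun n : nat => [set F : prodspace (fib gr x) K | exists k,
   [/\ gs k = x, gr k = x, k <> gid x, g k = n & Sk HG k F]].
apply: (@negligibleS _ _ _ _ (\bigcup_n T n)).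
  move=> F /= [a [a' [ne e1 e2]] e3].
  have [k [ks kr kne kF]] := bad_inv ne e1 e2 e3.
  by exists (g k) => //; exists k; split.
apply: negligible_bigcup => n.
case: (pselect (exists k, [/\ gs k = x, gr k = x, k <> gid x & g k = n])).
  move=> [k0 [ks0 kr0 kne0 gk0]].
  apply: (@negligibleS _ _ _ _ (Sk HG k0)); last first.
    exact: (Sk_negl HG (HP x) mB ks0 kr0 kne0 Xinf p0 p1).
  move=> F [k [ks kr kne gk hF]].
  have -> : k0 = k by apply: ginj; rewrite ?inE //= ?kr ?kr0 // gk gk0.
  exact: hF.
move=> nk; apply: (@negligibleS _ _ _ _ set0); last exact: negligible_set0.
move=> F [k [ks kr kne gk _]]; apply: nk; exists k; by split.
Qed.
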